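(* Let $\mathbb{0}=\{x\in\omega^\omega : x(n)=0 \text{ for all but finitely many } n\}$. Then every maximal chain of $(\omega^\omega\setminus\mathbb{0},\le^* )$ has size at least $\mathfrak{c}$; consequently $\mathfrak{mc}(\omega^\omega\setminus\mathbb{0},\le^* )=\mathfrak{c}$.
   Context: For $x,y\in\omega^\omega$, $x\le^* y$ means $x(n)\le y(n)$ for all but finitely many $n$. For a poset (or preorder) $(P,\le)$, a chain is a subset whose elements are pairwise comparable, and $\mathfrak{mc}(P)$ is the minimal cardinality of a maximal (with respect to inclusion) chain of $P$. $\mathfrak{c}=2^{\aleph_0}$. *)

(* Defs.v *)
Definition baire := nat -> nat.

Definition le_star (x y : baire) : Prop :=
  exists N : nat, forall n : nat, N <= n -> x n <= y n.

Definition zero_set (x : baire) : Prop :=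
  exists N : nat, forall n : nat, N <= n -> x n = 0.

Definition P (x : baire) : Prop := ~ zero_set x.

Definition is_chain (C : baire -> Prop) : Prop :=
  (forall x, C x -> P x) /\
  (forall x y, C x -> C y -> le_star x y \/ le_star y x).

Definition is_maximal_chain (C : baire -> Prop) : Prop :=
  is_chain C /\
  (forall D : baire -> Prop, is_chain D -> (forall x, C x -> D x) ->
     forall x, D x -> C x).

Definition card_ge_continuum (C : baire -> Prop) : Prop :=
  exists f : (nat -> bool) -> baire,
    (forall a b, f a = f b -> a = b) /\ (forall a, C (f a)).

Definition card_le_continuum (C : baire -> Prop) : Prop :=
  exists g : baire -> (nat -> bool),
    forall x y, C x -> C y -> g x = g y -> x = y.

(* Main.v *)
Require Import Defs.
From Stdlib Require Import Arith Lia Classical ClassicalEpsilon FunctionalExtensionality Cantor.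

Definition lt_star (x y : baire) : Prop := le_star x y /\ ~ le_star y x.

Lemma le_star_refl x : le_star x x.
Proof. exists 0; intros; lia. Qed.

Lemma le_star_trans x y z : le_star x y -> le_star y z -> le_star x z.
Proof.
  intros [N1 H1] [N2 H2]; exists (N1 + N2); intros n Hn.
  specialize (H1 n ltac:(lia)); specialize (H2 n ltac:(lia)); lia.
Qed.

Lemma P_up l x : P l -> le_star l x -> P x.
Proof.
  intros Hl [N1 H1] [N2 H2]; apply Hl; exists (N1 + N2); intros n Hn.
  specialize (H1 n ltac:(lia)); specialize (H2 n ltac:(lia)); lia.
Qed.

Lemma fill C x : is_maximal_chain C -> P x ->
  (forall c, C c -> le_star c x \/ le_star x c) -> C x.
Proof.
  intros [[HP Hc] Hmax] Px Hx.
  apply (Hmax (fun y => C y \/ y = x)).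
  - split.
    + intros y [Hy | ->]; auto.
    + intros y z [Hy | Hy] [Hz | Hz]; subst; auto.
      * destruct (Hx z Hz); auto.
      * left; apply le_star_refl.
  - auto.
  - auto.
Qed.

Lemma not_le_star_inf u l : ~ le_star u l -> forall N, exists n, N <= n /\ l n < u n.
Proof.
  intros H N. apply NNPP; intro H'. apply H. exists N; intros n Hn.
  destruct (le_lt_dec (u n) (l n)); auto. exfalso; apply H'; exists n; auto.
Qed.

Section Mix.
Variables l u : baire.

Fixpoint cnt (n : nat) : nat :=
  match n with 0 => 0 | S n' => cnt n' + (if l n' <? u n' then 1 else 0) end.

Lemma cnt_mono n m : n <= m -> cnt n <= cnt m.
Proof. induction 1; simpl; lia. Qed.

Lemma cnt_step n : cnt (S n) <= cnt n + 1.
Proof. simpl; destruct (l n <? u n); lia. Qed.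

Lemma cnt_hit m : forall n, m < cnt n -> exists d, l d < u d /\ cnt d = m.
Proof.
  induction n; simpl; intros H; [lia|].
  destruct (le_lt_dec (cnt n) m).
  - destruct (l n <? u n) eqn:E.
    + exists n; split; [apply Nat.ltb_lt; auto | lia].
    + lia.
  - auto.
Qed.

Hypothesis inf : forall N, exists n, N <= n /\ l n < u n.

Lemma cnt_unb m : exists n, m <= cnt n.
Proof.
  induction m. exists 0; lia.
  destruct IHm as [n Hn]. destruct (inf n) as [d [Hd Hld]].
  exists (S d). simpl. apply Nat.ltb_lt in Hld; rewrite Hld.
  pose proof (cnt_mono _ _ Hd); lia.
Qed.

Lemma par_hit N b : exists d, N <= d /\ l d < u d /\ Nat.even (cnt d) = b.
Proof.
  assert (Hm : exists m, cnt N < m /\ Nat.even m = b).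
  { destruct (Nat.even (S (cnt N))) eqn:E; destruct b.
    - exists (S (cnt N)); auto.
    - exists (S (S (cnt N))); split; [lia|]. rewrite Nat.even_succ, <- Nat.negb_even, E; auto.
    - exists (S (S (cnt N))); split; [lia|]. rewrite Nat.even_succ, <- Nat.negb_even, E; auto.
    - exists (S (cnt N)); auto. }
  destruct Hm as [m [Hm1 Hm2]].
  destruct (cnt_unb (S m)) as [n Hn].
  destruct (cnt_hit m n ltac:(lia)) as [d [Hd1 Hd2]].
  exists d; repeat split; auto; [|congruence].
  destruct (le_lt_dec N d); auto. pose proof (cnt_mono d N ltac:(lia)); lia.
Qed.

Definition mixf : baire := fun n => if Nat.even (cnt n) then u n else l n.

End Mix.

Lemma mix_spec l u : le_star l u -> ~ le_star u l ->
  le_star l (mixf l u) /\ le_star (mixf l u) u /\ ~ le_star (mixf l u) l /\ ~ le_star u (mixf l u).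
Proof.
  intros [N H] Hn. pose proof (not_le_star_inf _ _ Hn) as inf.
  unfold mixf; repeat split.
  - exists N; intros n Hn'; destruct (Nat.even _); auto.
  - exists N; intros n Hn'; destruct (Nat.even _); auto.
  - intros [M HM]. destruct (par_hit l u inf M true) as [d [? [? E]]].
    specialize (HM d H0); rewrite E in HM; lia.
  - intros [M HM]. destruct (par_hit l u inf M false) as [d [? [? E]]].
    specialize (HM d H0); rewrite E in HM; lia.
Qed.

Lemma chain_cmp C x y : is_maximal_chain C -> C x -> C y -> le_star x y \/ le_star y x.
Proof. intros [[_ H] _]; auto. Qed.

Lemma chain_P C x : is_maximal_chain C -> C x -> P x.
Proof. intros [[H _] _]; auto. Qed.

Lemma dense C l u : is_maximal_chain C -> C l -> C u -> lt_star l u ->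
  exists m, C m /\ lt_star l m /\ lt_star m u.
Proof.
  intros HC Cl Cu [H1 H2]. apply NNPP; intro Hno.
  destruct (mix_spec l u H1 H2) as [A1 [A2 [A3 A4]]].
  assert (Cx : C (mixf l u)).
  { apply fill; [exact HC | apply (P_up l); [eapply chain_P; eauto | exact A1] | ].
    intros c Cc.
    destruct (chain_cmp C c l HC Cc Cl) as [E|E].
    { left; eapply le_star_trans; eauto. }
    destruct (chain_cmp C c u HC Cc Cu) as [F|F].
    2:{ right; eapply le_star_trans; eauto. }
    destruct (classic (le_star c l)) as [G|G].
    { left; eapply le_star_trans; eauto. }
    destruct (classic (le_star u c)) as [K|K].
    { right; eapply le_star_trans; eauto. }
    exfalso; apply Hno; exists c; repeat split; auto. }
  apply Hno; exists (mixf l u); repeat split; auto.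
Qed.

Lemma below C c0 : is_maximal_chain C -> C c0 -> exists c, C c /\ lt_star c c0.
Proof.
  intros HC C0. apply NNPP; intro Hno.
  assert (H1 : le_star (fun _ => 0) c0) by (exists 0; intros; lia).
  assert (H2 : ~ le_star c0 (fun _ => 0)).
  { intros [N HN]; apply (chain_P C c0 HC C0); exists N; intros n Hn; specialize (HN n Hn); lia. }
  destruct (mix_spec _ _ H1 H2) as [A1 [A2 [A3 A4]]].
  assert (Px : P (mixf (fun _ => 0) c0)).
  { intros [N HN]; apply A3; exists N; intros n Hn; rewrite HN; auto. }
  assert (Cx : C (mixf (fun _ => 0) c0)).
  { apply fill; auto. intros c Cc.
    destruct (chain_cmp C c c0 HC Cc C0) as [E|E].
    - destruct (classic (le_star c0 c)) as [F|F].
      + right; eapply le_star_trans; eauto.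
      + exfalso; apply Hno; exists c; split; auto; split; auto.
    - right; eapply le_star_trans; eauto. }
  apply Hno; eexists; split; [exact Cx|split; auto].
Qed.

Lemma nonempty C : is_maximal_chain C -> exists c, C c.
Proof.
  intros HC. apply NNPP; intro Hno.
  apply Hno; exists (fun _ => 1). apply fill; auto.
  - intros [N HN]; specialize (HN N (le_n _)); lia.
  - intros c Cc; exfalso; eauto.
Qed.

Lemma finite_N (Q : nat -> nat -> Prop) k :
  (forall n m, n <= m -> forall i, Q i n -> True) ->
  (forall i, i <= k -> exists N, forall n, N <= n -> Q i n) ->
  exists N, forall n, N <= n -> forall i, i <= k -> Q i n.
Proof.
  intros _. induction k; intros H.
  - destruct (H 0 (le_n _)) as [N HN]. exists N; intros n Hn i Hi.
    replace i with 0 by lia; auto.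
  - destruct IHk as [N1 H1]; [intros; apply H; lia|].
    destruct (H (S k) (le_n _)) as [N2 H2].
    exists (N1 + N2); intros n Hn i Hi.
    destruct (Nat.eq_dec i (S k)); [subst; apply H2; lia| apply H1; lia].
Qed.

Fixpoint smax (a : nat -> baire) (N : nat -> nat) (n k : nat) : nat :=
  match k with
  | 0 => 0
  | S k' => Nat.max (smax a N n k') (if N k' <=? n then a k' n else 0)
  end.

Lemma smax_ge a N n k k' : k' < k -> N k' <= n -> a k' n <= smax a N n k.
Proof.
  induction k; simpl; intros H1 H2; [lia|].
  destruct (Nat.eq_dec k' k).
  - subst. apply Nat.leb_le in H2; rewrite H2; lia.
  - specialize (IHk ltac:(lia) H2); lia.
Qed.

Lemma smax_le a N n k B : (forall k', k' < k -> N k' <= n -> a k' n <= B) -> smax a N n k <= B.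
Proof.
  induction k; simpl; intros H; [lia|].
  apply Nat.max_lub; [apply IHk; intros; apply H; lia|].
  destruct (N k <=? n) eqn:E; [apply H; [lia| apply Nat.leb_le; auto]|lia].
Qed.

Lemma interp (a b : nat -> baire) :
  (forall n, le_star (a n) (a (S n))) -> (forall n, le_star (b (S n)) (b n)) ->
  (forall n, le_star (a n) (b n)) ->
  exists x, forall n, le_star (a n) x /\ le_star x (b n).
Proof.
  intros Ha Hb Hab.
  assert (Ha' : forall i k, i <= k -> le_star (a i) (a k)).
  { induction 1; [apply le_star_refl| eapply le_star_trans; eauto]. }
  assert (Hb' : forall i k, i <= k -> le_star (b k) (b i)).
  { induction 1; [apply le_star_refl| eapply le_star_trans; eauto]. }
  assert (HN : forall k, exists N, forall n, N <= n -> forall i, i <= k ->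
     a i n <= a k n /\ a k n <= b k n /\ b k n <= b i n).
  { intros k. apply (finite_N (fun i n => a i n <= a k n /\ a k n <= b k n /\ b k n <= b i n) k).
    - auto.
    - intros i Hi. destruct (Ha' i k Hi) as [N1 H1]. destruct (Hb' i k Hi) as [N2 H2].
      destruct (Hab k) as [N3 H3]. exists (N1+N2+N3); intros n Hn.
      repeat split; [apply H1|apply H3|apply H2]; lia. }
  destruct (choice _ HN) as [N HNs].
  exists (fun n => smax a N n (S n)). intros j; split.
  - exists (N j + j); intros n Hn. apply smax_ge; lia.
  - exists (N j); intros n Hn. apply smax_le. intros k Hk Hk2.
    destruct (le_lt_dec j k).
    + destruct (HNs k n Hk2 j l) as [_ [A B]]; lia.
    + destruct (HNs j n Hn k ltac:(lia)) as [A [B _]]; lia.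
Qed.

Section Tree.
Variable C : baire -> Prop.
Hypothesis HC : is_maximal_chain C.

Definition inhb : inhabited baire := inhabits (fun _ => 0).

Definition mid (l u : baire) : baire :=
  epsilon inhb (fun m => C m /\ lt_star l m /\ lt_star m u).

Lemma mid_spec l u : C l -> C u -> lt_star l u ->
  C (mid l u) /\ lt_star l (mid l u) /\ lt_star (mid l u) u.
Proof. intros. unfold mid. apply epsilon_spec. apply dense; auto. Qed.

Definition root : baire * baire :=
  epsilon (inhabits ((fun _ => 0), (fun _ => 0)))
    (fun p => C (fst p) /\ C (snd p) /\ lt_star (fst p) (snd p)).

Lemma root_spec : C (fst root) /\ C (snd root) /\ lt_star (fst root) (snd root).
Proof.
  unfold root; apply epsilon_spec.
  destruct (nonempty C HC) as [c Cc]. destruct (below C c HC Cc) as [d [Cd Hd]].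
  exists (d, c); simpl; auto.
Qed.

Fixpoint J (a : nat -> bool) (n : nat) : baire * baire :=
  match n with
  | 0 => root
  | S n' => let p := J a n' in
            let m1 := mid (fst p) (snd p) in
            let m2 := mid m1 (snd p) in
            if a n' then (m2, snd p) else (fst p, m1)
  end.

Lemma J_inv a n : C (fst (J a n)) /\ C (snd (J a n)) /\ lt_star (fst (J a n)) (snd (J a n)).
Proof.
  induction n as [|n [H1 [H2 H3]]]; [apply root_spec|].
  simpl. destruct (mid_spec _ _ H1 H2 H3) as [M1 [M2 M3]].
  destruct (mid_spec _ _ M1 H2 M3) as [K1 [K2 K3]].
  destruct (a n); simpl; auto.
Qed.

Lemma J_mono a n : le_star (fst (J a n)) (fst (J a (S n))) /\ le_star (snd (J a (S n))) (snd (J a n)).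
Proof.
  destruct (J_inv a n) as [H1 [H2 H3]].
  destruct (mid_spec _ _ H1 H2 H3) as [M1 [M2 M3]].
  destruct (mid_spec _ _ M1 H2 M3) as [K1 [K2 K3]].
  simpl. destruct (a n); simpl; split; try apply le_star_refl.
  - eapply le_star_trans; [apply M2|apply K2].
  - apply M3.
Qed.

Definition cutP (a : nat -> bool) (e : baire) : Prop :=
  C e /\ forall n, le_star (fst (J a n)) e /\ le_star e (snd (J a n)).

Lemma cut_ex a : exists e, cutP a e.
Proof.
  apply NNPP; intro Hno.
  destruct (interp (fun n => fst (J a n)) (fun n => snd (J a n))) as [x Hx].
  - intros; apply J_mono.
  - intros; apply J_mono.
  - intros n; apply (J_inv a n).
  - apply Hno; exists x; split; auto.
    apply fill; auto.
    + apply (P_up (fst (J a 0))); [eapply chain_P; eauto; apply J_inv | apply Hx].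
    + intros c Cc.
      destruct (classic (forall n, le_star (fst (J a n)) c /\ le_star c (snd (J a n)))) as [A|A].
      { exfalso; apply Hno; exists c; split; auto. }
      apply not_all_ex_not in A; destruct A as [n A].
      destruct (J_inv a n) as [H1 [H2 _]].
      destruct (chain_cmp C c _ HC Cc H1) as [E|E].
      * left; eapply le_star_trans; [exact E| apply Hx].
      * destruct (chain_cmp C c _ HC Cc H2) as [F|F].
        -- exfalso; auto.
        -- right; eapply le_star_trans; [apply Hx| exact F].
Qed.

Definition f (a : nat -> bool) : baire := epsilon inhb (cutP a).

Lemma f_spec a : cutP a (f a).
Proof. unfold f; apply epsilon_spec, cut_ex. Qed.

Lemma first_diff (a b : nat -> bool) n : (exists k, k < n /\ a k <> b k) ->
  exists k, a k <> b k /\ forall i, i < k -> a i = b i.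
Proof.
  induction n; intros [k [Hk Hab]]; [lia|].
  destruct (classic (exists k, k < n /\ a k <> b k)) as [E|E]; auto.
  exists k; split; auto. intros i Hi. apply NNPP; intro Hi'. apply E; exists i; split; auto; lia.
Qed.

Lemma J_agree a b k : (forall i, i < k -> a i = b i) -> J a k = J b k.
Proof.
  induction k; intros H; simpl; auto.
  rewrite IHk by (intros; apply H; lia). rewrite (H k (le_n _)). auto.
Qed.

Lemma f_inj a b : f a = f b -> a = b.
Proof.
  intros Hf. apply NNPP; intro Hab.
  assert (E : exists k, a k <> b k).
  { apply NNPP; intro E; apply Hab; apply functional_extensionality; intro k.
    apply NNPP; intro; apply E; eauto. }
  destruct E as [k0 Hk0].
  destruct (first_diff a b (S k0) ltac:(exists k0; split; auto)) as [k [Hk Hlt]].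
  pose proof (J_agree a b k Hlt) as Hag.
  destruct (J_inv a k) as [H1 [H2 H3]].
  destruct (mid_spec _ _ H1 H2 H3) as [M1 [M2 M3]].
  destruct (mid_spec _ _ M1 H2 M3) as [K1 [[_ K4] _]].
  destruct (f_spec a) as [_ Fa]. destruct (f_spec b) as [_ Fb].
  specialize (Fa (S k)); specialize (Fb (S k)). simpl in Fa, Fb. rewrite <- Hag in Fb.
  rewrite <- Hf in Fb.
  destruct (a k) eqn:Ea; destruct (b k) eqn:Eb; try congruence; simpl in Fa, Fb.
  - apply K4. eapply le_star_trans; [apply Fa| apply Fb].
  - apply K4. eapply le_star_trans; [apply Fb| apply Fa].
Qed.

End Tree.

Theorem part1 : forall C : baire -> Prop, is_maximal_chain C -> card_ge_continuum C.
Proof.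
  intros C HC. exists (f C). split.
  - apply f_inj; auto.
  - intros a; apply (f_spec C HC a).
Qed.
From mathcomp Require Import boolp classical_sets.

Lemma exists_max_chain : exists C : baire -> Prop, is_maximal_chain C.
Proof.
  destruct (@Zorn_bigcup baire is_chain) as [A [HA Hmax]].
  - intros F HF Htot. split.
    + intros x [X FX Xx]. exact (proj1 (HF X FX) x Xx).
    + intros x y [X FX Xx] [Y FY Yy].
      destruct (Htot X Y FX FY) as [S|S].
      * exact (proj2 (HF Y FY) x y (S x Xx) Yy).
      * exact (proj2 (HF X FX) x y Xx (S y Yy)).
  - exists A; split; auto.
    intros D HD AD x Dx.
    destruct (boolp.pselect (A x)) as [Ax|Ax]; auto.
    exfalso; apply (Hmax D); auto.
    split; [exact AD|]. intros DA; exact (Ax (DA x Dx)).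
Qed.

Definition enc (x : baire) : nat -> bool :=
  fun m => let p := Cantor.of_nat m in Nat.eqb (x (fst p)) (snd p).

Lemma enc_eq x n k : enc x (Cantor.to_nat (n, k)) = Nat.eqb (x n) k.
Proof. unfold enc. rewrite Cantor.cancel_of_to. reflexivity. Qed.

Lemma part2 : exists C : baire -> Prop, is_maximal_chain C /\ card_le_continuum C.
Proof.
  destruct exists_max_chain as [C HC]. exists C; split; auto.
  exists enc. intros x y _ _ E. apply functional_extensionality; intro n.
  assert (H : enc x (Cantor.to_nat (n, x n)) = enc y (Cantor.to_nat (n, x n))) by (rewrite E; reflexivity).
  rewrite !enc_eq, Nat.eqb_refl in H. symmetry in H. apply Nat.eqb_eq in H; auto.
Qed.

Theorem mainTheorem2 :
  (forall C : baire -> Prop, is_maximal_chain C -> card_ge_continuum C) /\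
  (exists C : baire -> Prop, is_maximal_chain C /\ card_le_continuum C).
Proof. split; [exact part1 | exact part2]. Qed.
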